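(* Let $R$ be a compact Hausdorff unitary topological ring satisfying the first countability axiom. (i) Every surjective continuous $R$-linear map $f:M\to N$ of t.d. $R$-modules is strict and admits a continuous (not necessarily additive) map $s:N\to M$ with $f\circ s=\mathrm{id}_N$. (ii) An injective continuous $R$-linear map $i:M\to N$ of t.d. $R$-modules is strict if and only if there is a continuous (not necessarily additive) map $r:N\to M$ with $r\circ i=\mathrm{id}_M$.
   Context: A complete totally disconnected (t.d.) $R$-module is a Hausdorff, complete topological left $R$-module which has a basis of neighbourhoods of $0$ consisting of open submodules and which satisfies the second countability axiom. A continuous $R$-linear map $f:M\to N$ is strict if the induced bijection $M/\ker f\to f(M)$ is a homeomorphism (quotient topology on the source, subspace topology on the target). *)

(* Defs.v *)
From HB Require Import structures.
From mathcomp Require Import all_boot all_order all_algebra.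
From mathcomp Require Import boolp classical_sets functions cardinality topology pseudometric_normed_Zmodule.
Set Implicit Arguments. Unset Strict Implicit. Unset Printing Implicit Defensive.
Import Order.TTheory GRing.Theory Num.Theory.
Local Open Scope classical_set_scope.
Local Open Scope ring_scope.

#[short(type="topPzRingType")]
HB.structure Definition TopPzRing := {R of GRing.PzRing R & Topological R}.

#[short(type="topLmodType")]
HB.structure Definition TopLmod (R : topPzRingType) :=
  {M of GRing.Lmodule R M & Topological M}.

Definition topological_ring (R : topPzRingType) : Prop :=
  continuous (fun xy : R * R => xy.1 + xy.2) /\
  continuous (fun x : R => - x) /\
  continuous (fun xy : R * R => xy.1 * xy.2).

Definition topological_module (R : topPzRingType) (M : topLmodType R) : Prop :=
  continuous (fun xy : M * M => xy.1 + xy.2) /\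
  continuous (fun x : M => - x) /\
  continuous (fun rx : R * M => rx.1 *: rx.2).

Definition first_countable (T : topologicalType) : Prop :=
  forall x : T, exists2 B : set (set T), countable B &
    (forall b, B b -> nbhs x b) /\
    (forall U, nbhs x U -> exists2 b, B b & b `<=` U).

Definition is_submodule (R : pzRingType) (M : lmodType R) (V : set M) : Prop :=
  V 0 /\ (forall x y, V x -> V y -> V (x + y)) /\
  (forall (r : R) x, V x -> V (r *: x)).

Definition module_cauchy (R : topPzRingType) (M : topLmodType R)
    (F : set_system M) : Prop :=
  forall U, nbhs (0 : M) U -> exists2 A, F A & forall x y, A x -> A y -> U (x - y).

Definition module_complete (R : topPzRingType) (M : topLmodType R) : Prop :=
  forall F : set_system M, ProperFilter F -> module_cauchy F ->
    exists x : M, F --> x.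

Definition td_module (R : topPzRingType) (M : topLmodType R) : Prop :=
  [/\ topological_module M,
      hausdorff_space M,
      module_complete M,
      (forall U, nbhs (0 : M) U ->
         exists V : set M, [/\ open V, is_submodule V & V `<=` U]) &
      @second_countable M].

(* f : M -> N is strict: the induced bijection M/ker f -> f(M) is a
   homeomorphism, where M/ker f carries the quotient topology and f(M) the
   subspace topology.  Unfolded: open sets of M/ker f are the images of the
   open subsets of M that are saturated for x ~ y <-> f x = f y; open sets of
   f(M) are the traces V `&` range f of open sets V of N.  The first conjunct
   is continuity of the induced bijection, the second continuity of its
   inverse. *)
Definition strict (R : topPzRingType) (M N : topLmodType R) (f : M -> N) : Prop :=
  (forall V : set N, open V -> open (f @^-1` (V `&` range f))) /\
  (forall U : set M, open U -> (forall x y, U x -> f x = f y -> U y) ->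
     exists2 V : set N, open V & f @` U = V `&` range f).

(* Main.v *)
Require Import Defs.
From HB Require Import structures.
From mathcomp Require Import all_boot all_order all_algebra.
From mathcomp Require Import boolp classical_sets functions cardinality topology pseudometric_normed_Zmodule.
Set Implicit Arguments. Unset Strict Implicit. Unset Printing Implicit Defensive.
Import Order.TTheory GRing.Theory Num.Theory.
Local Open Scope classical_set_scope.
Local Open Scope ring_scope.

Section Sub.
Variables (R : pzRingType) (M : lmodType R) (V : set M) (hV : is_submodule V).
Lemma sub0 : V 0. Proof. by case: hV. Qed.
Lemma subD x y : V x -> V y -> V (x + y). Proof. by case: hV => _ [h _]; apply: h. Qed.
Lemma subZ (r : R) x : V x -> V (r *: x). Proof. by case: hV => _ [_ h]; apply: h. Qed.
Lemma subN x : V x -> V (- x).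
Proof. by move=> Vx; rewrite -scaleN1r; apply: subZ. Qed.
Lemma subB x y : V x -> V y -> V (x - y).
Proof. by move=> Vx Vy; apply: subD => //; apply: subN. Qed.
Lemma subBr x y : V (x - y) -> V (y - x).
Proof. by move=> H; rewrite -opprB; apply: subN. Qed.
End Sub.

Lemma submodI (R : pzRingType) (M : lmodType R) (V W : set M) :
  is_submodule V -> is_submodule W -> is_submodule (V `&` W).
Proof.
move=> hV hW; split; first by split; apply: sub0.
split; first by move=> x y [? ?] [? ?]; split; apply: subD.
by move=> r x [? ?]; split; apply: subZ.
Qed.

Lemma submodT (R : pzRingType) (M : lmodType R) : is_submodule (@setT M).
Proof. by []. Qed.

Lemma subr_mid (V : zmodType) (a b c : V) : a - b = (c - b) - (c - a).
Proof. by rewrite opprB [in RHS]addrC addrA subrK. Qed.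

Lemma subr_mid2 (V : zmodType) (a b c : V) : a - b = (a - c) - (b - c).
Proof. by rewrite opprB addrA subrK. Qed.

Lemma zid (V:zmodType) (y u a b c : V) : u - (b - c) = (y + u - (a + b)) - (y - (a + c)).
Proof.
rewrite [y + u]addrC -addrA -addrA; congr (_ + _).
rewrite !opprB opprD !addrA.
rewrite [y - a - b + a]addrAC -[y - a + a]addrA addNr addr0.
by rewrite addrAC [y - b - y]addrAC subrr add0r addrC.
Qed.

Section Basics.
Variables (R : topPzRingType) (M : topLmodType R) (hM : topological_module M).

Lemma nbhs_trans (a x : M) (A : set M) :
  nbhs (a + x) A -> nbhs x (fun z => A (a + z)).
Proof.
move=> HA; have := hM.1 (a, x) A HA.
move=> [[P Q] /= [Pa Qx] sPQ].
apply: filterS Qx => z Qz; apply: (sPQ (a, z)); split => //=.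
exact: nbhs_singleton.
Qed.

Lemma nbhs0_at (x : M) (A : set M) : nbhs 0 A -> nbhs x (fun z => A (z - x)).
Proof.
move=> HA; have := @nbhs_trans (- x) x A; rewrite addNr => /(_ HA).
by apply: filterS => z; rewrite addrC.
Qed.

Lemma nbhs_at0 (x : M) (A : set M) : nbhs x A -> nbhs 0 (fun z => A (x + z)).
Proof. by move=> HA; apply: nbhs_trans; rewrite addr0. Qed.

Definition chain (C : nat -> set M) :=
  [/\ (forall n, is_submodule (C n)), (forall n, nbhs 0 (C n)),
      (forall n, C n.+1 `<=` C n) &
      (forall U, nbhs 0 U -> exists n, C n `<=` U)].

Lemma chain_le C : chain C -> forall m n, (m <= n)%N -> C n `<=` C m.
Proof.
move=> [_ _ hd _] m n /subnK <-; elim: (n - m)%N => [|k IH] //=.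
by move=> x /hd /IH.
Qed.

Lemma hausdorff0 C : hausdorff_space M -> chain C -> forall d : M,
  (forall n, C n d) -> d = 0.
Proof.
move=> hH hC d hd; apply: hH => A B Ad B0.
have [hs _ _ hb] := hC.
have [n hn] := hb _ (filterI (nbhs_at0 Ad) B0).
exists 0; split; last exact: nbhs_singleton B0.
have [h1 _] := hn (- d) (subN (hs n) (hd n)).
by rewrite /= addrN in h1.
Qed.

Lemma chain_conv C : module_complete M -> chain C -> forall (g : nat -> nat),
  {homo g : a b / (a <= b)%N} -> (forall i, (i <= g i)%N) ->
  forall p : nat -> M, (forall i, C (g i) (p i.+1 - p i)) ->
  exists x, forall i, C (g i) (x - p i).
Proof.
move=> hc hC g hg hgi p hp.
have [hs h0 _ h4] := hC.
have tel : forall i k, (i <= k)%N -> C (g i) (p k - p i).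
  move=> i k /subnK <-; elim: (k - i)%N => [|j IH]; first by rewrite subrr; apply: sub0.
  rewrite addSn -(subrK (p (j + i)%N) (p (j + i).+1)) -addrA.
  apply: subD => //; apply: (chain_le hC (hg _ _ (leq_addl j i))).
  exact: hp.
have [x hx] : exists x : M, p @ \oo --> x.
  apply: hc.
  move=> U hU; have [n hn] := h4 _ hU.
  exists (p @` [set k | (n <= k)%N]); first by exists n => // k /= hk; exists k.
  move=> _ _ [a /= ha <-] [b /= hb <-]; apply: hn.
  rewrite (subr_mid _ _ (p n)); apply: (chain_le hC (hgi n)).
  by apply: subB => //; apply: subBr => //; apply: tel.
exists x => i.
  have /hx [N _ hN] := nbhs0_at x (h0 (g i)).
  have := hN (maxn N i) (leq_maxl _ _) => /= h1.
  rewrite (subr_mid _ _ (p (maxn N i))).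
  apply: subB => //; apply: tel; exact: leq_maxr.
Qed.
End Basics.

Section TD.
Variables (R : topPzRingType) (M : topLmodType R) (hM : topological_module M).

Lemma open_sub_nbhs (V : set M) : open V -> is_submodule V -> nbhs 0 V.
Proof. by move=> oV sV; apply: open_nbhs_nbhs; split => //; apply: sub0. Qed.

Lemma coset_enum : @second_countable M -> forall V : set M, open V ->
  is_submodule V -> exists D : nat -> M, forall x, exists k, V (x - D k).
Proof.
move=> [Bs cB [Bo Bb]] V oV sV.
have /countable_injP [f finj] := cB.
exists (fun k => xget 0 (fun d => exists b, [/\ Bs b, f b = k & b d])) => x.
have hx := nbhs0_at hM x (open_sub_nbhs oV sV).
have [b [Bsb bx] sb] := Bb x _ hx.
exists (f b).
have [b' [Bsb' fb' b'd]] := xgetPex 0 (ex_intro (fun d => exists b0, [/\ Bs b0, f b0 = f b & b0 d]) x (ex_intro _ b (And3 Bsb erefl bx))).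
have eb : b' = b by apply: finj; rewrite ?inE.
by subst b'; apply: subBr => //; apply: sb.
Qed.

Lemma td_chain : td_module M -> exists C : nat -> set M,
  [/\ chain C, (forall n, open (C n)) & C 0 = setT].
Proof.
move=> [_ _ _ hsub [Bs cB [Bo Bb]]].
have /countable_injP [f finj] := cB.
have /choice [S hS] : forall b : set M, exists S : set M,
    [/\ open S, is_submodule S & nbhs 0 b -> S `<=` b].
  move=> b; case: (pselect (nbhs 0 b)) => hb.
    by have [V [oV sV Vb]] := hsub _ hb; exists V; split.
  by exists setT; split => //; exact: openT.
pose T k := fun x => forall b, Bs b -> b 0 -> f b = k -> S b x.
have subT k : is_submodule (T k).
  split; first by move=> b *; apply: sub0; case: (hS b).
  split; first by move=> x y hx hy b *; apply: subD; [case: (hS b)|apply: hx|apply: hy].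
  by move=> r x hx b *; apply: subZ; [case: (hS b)|apply: hx].
have openT' k : open (T k).
  case: (pselect (exists b, [/\ Bs b, b 0 & f b = k])) => [[b0 [B0 b00 fb0]]|nb].
    have -> : T k = S b0.
      apply/seteqP; split => [x hx|x hx b Bb' b0' fb']; first exact: hx.
      have eb : b = b0 by apply: finj; rewrite ?inE // fb' fb0.
      by subst b.
    by case: (hS b0).
  have -> : T k = setT.
    apply/seteqP; split => // x _ b Bb' b0' fb'; exfalso; apply: nb; exists b.
    by split.
  exact: openT.
pose C n := fun x => forall k, (k < n)%N -> T k x.
have oC n : open (C n).
  elim: n => [|n IH].
    have -> : C 0 = setT by apply/seteqP; split.
    exact: openT.
  have -> : C n.+1 = C n `&` T n.
    apply/seteqP; split => [x hx|x [h1 h2] k]; first by split => [k hk|]; apply: hx => //; exact: ltnW.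
    by rewrite ltnS leq_eqVlt => /orP [/eqP ->|/h1].
  exact: openI.
have sC n : is_submodule (C n).
  split; first by move=> k _; apply: (sub0 (subT k)).
  split; first by move=> x y hx hy k hk; apply: (subD (subT k)); [apply: hx|apply: hy].
  by move=> r x hx k hk; apply: (subZ (subT k)); apply: hx.
exists C; split => //; last by apply/seteqP; split.
split => //.
- by move=> n; apply: open_sub_nbhs.
- by move=> n x hx k hk; apply: hx; exact: ltnW.
- move=> U hU; have [b [Bsb b0] sb] := Bb 0 _ hU.
  exists (f b).+1 => x hx; apply: sb.
  have hb : nbhs 0 b by apply: open_nbhs_nbhs; split => //; apply: Bo.
  by case: (hS b) => _ _ /(_ hb); apply; apply: (hx (f b)).
Qed.
End TD.

Section Lin.
Variables (R : pzRingType) (M N : lmodType R) (f : {linear M -> N}).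
Lemma sub_preim (V : set N) : is_submodule V -> is_submodule (f @^-1` V).
Proof.
move=> hV; split; first by rewrite /= linear0; apply: sub0.
split; first by move=> x y hx hy; rewrite /= linearD; apply: subD.
by move=> r x hx; rewrite /= linearZ; apply: subZ.
Qed.
Lemma sub_img (V : set M) : is_submodule V -> is_submodule (f @` V).
Proof.
move=> hV; split; first by exists 0; [apply: sub0|rewrite linear0].
split; first by move=> _ _ [x hx <-] [y hy <-]; exists (x + y); [apply: subD|rewrite linearD].
by move=> r _ [x hx <-]; exists (r *: x); [apply: subZ|rewrite linearZ].
Qed.
End Lin.

Lemma cont_loc (S T : topologicalType) (r : S -> T) :
  (forall y A, nbhs (r y) A -> nbhs y (r @^-1` A)) -> continuous r.
Proof. by move=> h y A hA; apply: h. Qed.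

Section Retract.
Variables (R : topPzRingType) (M N : topLmodType R).
Hypotheses (tM : td_module M) (tN : td_module N).
Variables (i : {linear M -> N}) (ci : continuous i) (ii : injective i) (si : strict i).

Lemma retract_ex : exists r : N -> M, continuous r /\ cancel i r.
Proof.
have hM : topological_module M by case: tM.
have hN : topological_module N by case: tN.
have hHN : hausdorff_space N by case: tN.
have cM : module_complete M by case: tM.
have [U [hU oU U0]] := td_chain tN.
have [Us U0n Ud Ub] := hU.
pose V n := i @^-1` U n.
have hV : chain V.
  split.
  - by move=> n; apply: sub_preim.
  - move=> n; have h0 : nbhs (i 0) (U n) by rewrite linear0.
    exact: (ci h0).
  - by move=> n x /Ud.
  - move=> G hG; have [_ _ _ hsub _] := tM.
    have [O [oO sO OG]] := hsub _ hG.
    have [V' oV' eV'] : exists2 V' : set N, open V' & i @` O = V' `&` range i.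
      by apply: si.2 => // x y Ox /ii <-.
    have [V'0 _] : (V' `&` range i) 0.
      by rewrite -eV'; exists 0; [apply: (sub0 sO)|rewrite linear0].
    have [n hn] := Ub V' (open_nbhs_nbhs (conj oV' V'0)).
    exists n => x hx; apply: OG.
    have [o Oo eo] : (i @` O) (i x) by rewrite eV'; split; [apply: hn|exists x].
    by rewrite -(ii eo).
have Ule := chain_le hU.
have [Vs V0n Vd Vb] := hV.
have closed_rng : forall y, (forall n, exists x, U n (y - i x)) -> exists x, y = i x.
  move=> y /choice [xs hxs].
 have [x hx] : exists x, forall k, V k (x - xs k).
    apply: (@chain_conv _ _ hM V cM hV id (fun a b h => h) (fun k => leqnn k) xs) => k.
     rewrite /V /= linearB.
    rewrite (subr_mid _ _ y); apply: (subB (Us k)); [apply: hxs|apply: Ud; apply: hxs].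
  exists x; apply/eqP; rewrite -subr_eq0; apply/eqP.
  apply: (hausdorff0 hN hHN hU) => n.
  rewrite (subr_mid _ _ (i (xs n))); apply: (subB (Us n)); apply: (subBr (Us n)).
    by have := hx n; rewrite /V /= linearB.
  exact: hxs.
pose P y n := exists x', U n (y - i x').
pose S y x := forall n, P y n -> U n (y - i x).
have Pmono y m n : (m <= n)%N -> P y n -> P y m.
  by move=> hmn [x' hx']; exists x'; apply: Ule hmn _ hx'.
have Sex y : exists x, S y x.
  case: (pselect (forall n, P y n)) => [hall|].
    have [x ->] := closed_rng y hall; exists x => n _; rewrite subrr; apply: sub0 (Us n).
  move=> /existsNP [n]; elim: n => [|n IH] hn.
    by exfalso; apply: hn; exists 0; rewrite U0.
  case: (pselect (P y n)) => [[x hx]|/IH //].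
  exists x => m hm; case: (leqP m n) => hmn; first exact: Ule hmn _ hx.
  by exfalso; apply: hn; apply: Pmono hm.
pose r y := xget 0 (S y).
have rS y : S y (r y) by apply: xgetPex.
have cancel_ir : cancel i r.
  move=> x; apply: ii; apply/eqP; rewrite -subr_eq0; apply/eqP.
  apply: (hausdorff0 hN hHN hU) => n; apply: (subBr (Us n)); apply: rS; exists x; rewrite subrr; apply: sub0 (Us n).
exists r; split => //.
apply: cont_loc => y A hA.
case: (pselect (forall n, P y n)) => [hall|].
  have [x0 ey] := closed_rng y hall.
  have ry : r y = x0 by rewrite ey cancel_ir.
  rewrite ry in hA.
  have [k hk] := Vb _ (nbhs_at0 hM hA).
  apply: filterS (nbhs0_at hN y (U0n k)) => z hz /=.
  have hz' : U k (z - i (r z)) by apply: rS; exists x0; rewrite -ey.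
  have := hk (r z - x0); rewrite [x0 + _]addrC subrK; apply.
  rewrite /V /= linearB -ey (subr_mid _ _ z); apply: subB => //.
move=> /existsNP [n0 hn0].
apply: filterS (nbhs0_at hN y (U0n n0)) => z hz /=.
have -> : r z = r y.
  rewrite /r; congr xget; apply/funext => x; apply/propext.
  rewrite /S; split => h n hn.
  - case: (leqP n n0) => hle.
    + have hz' : U n (z - y) := Ule _ _ hle _ hz.
      have : U n (z - i x).
        apply: h; case: hn => x' hx'; exists x'.
        by rewrite -(subrK y z) -addrA; apply: subD => //.
      move=> h2; rewrite (subr_mid _ _ z); apply: subB => //; exact: subBr.
    + by exfalso; apply: hn0; apply: Pmono (ltnW hle) hn.
  - case: (leqP n n0) => hle.
    + have hz' : U n (z - y) := Ule _ _ hle _ hz.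
      have : U n (y - i x).
        apply: h; case: hn => x' hx'; exists x'.
        by rewrite -(subrK z y) -addrA; apply: subD => //; apply: subBr.
      move=> h2; rewrite -(subrK y z) -addrA; apply: subD => //.
    + exfalso; apply: hn0.
      case: hn => x' hx'; exists x'; rewrite -(subrK z y) -addrA.
      apply: (subD (Us n0)); first exact: (subBr (Us n0)).
      exact: (Ule _ _ (ltnW hle)).
exact: nbhs_singleton hA.
Qed.
End Retract.

Lemma homo_succ (g : nat -> nat) : (forall k, (g k < g k.+1)%N) ->
  {homo g : a b / (a <= b)%N} /\ (forall k, (k <= g k)%N).
Proof.
move=> hg; split.
  move=> a b /subnK <-; elim: (b - a)%N => [|j IH] //=.
  by rewrite addSn (leq_trans IH) // ltnW.
by elim => [|k IH] //; apply: leq_ltn_trans IH (hg k).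
Qed.

Section Baire.
Variables (R : topPzRingType) (N : topLmodType R) (hN : topological_module N).
Variables (cN : module_complete N) (U : nat -> set N) (hU : chain U).

Definition clo (F : set N) (y : N) := forall n, exists a, F a /\ U n (y - a).

Lemma baire (F : nat -> set N) : (forall y, exists k, F k y) ->
  exists k y0 m, forall u, U m u -> clo (F k) (y0 + u).
Proof.
move=> cover; apply: contrapT => H.
have [Us U0n Ud Ub] := hU.
have Ule := chain_le hU.
have /choice [st hst] : forall kp : nat * (N * nat), exists q : N * nat,
    [/\ U kp.2.2 (q.1 - kp.2.1), (kp.2.2 < q.2)%N &
        forall w, U q.2 (w - q.1) -> ~ F kp.1 w].
  move=> [k [y m]] /=.
  have /existsNP [u] : ~ forall u, U m u -> clo (F k) (y + u).
    by move=> h; apply: H; exists k, y, m.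
  move=> /not_implyP [Umu /existsNP [n hn]].
  exists (y + u, maxn n m.+1) => /=; split.
  - by rewrite addrAC subrr add0r.
  - exact: leq_maxr.
  - move=> w hw Fw; apply: hn; exists w; split => //.
    by apply: (subBr (Us n)); apply: Ule hw; exact: leq_maxl.
pose sq := fix sq k := if k is k'.+1 then st (k', sq k') else (0 : N, 0%N).
have hsq k : [/\ U (sq k).2 ((sq k.+1).1 - (sq k).1), ((sq k).2 < (sq k.+1).2)%N &
        forall w, U (sq k.+1).2 (w - (sq k.+1).1) -> ~ F k w].
  exact: (hst (k, sq k)).
have hinc k : ((sq k).2 < (sq k.+1).2)%N by case: (hsq k).
have hstp k : U (sq k).2 ((sq k.+1).1 - (sq k).1) by case: (hsq k).
have [hg hgi] := @homo_succ (fun k => (sq k).2) hinc.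
have [x hx] := @chain_conv _ _ hN U cN hU (fun k => (sq k).2) hg hgi
  (fun k => (sq k).1) hstp.
have [k Fk] := cover x.
by have [_ _ h] := hsq k; apply: (h x) => //; apply: hx.
Qed.
End Baire.

Section Open.
Variables (R : topPzRingType) (M N : topLmodType R).
Hypotheses (hM : topological_module M) (hN : topological_module N).
Hypotheses (cM : module_complete M) (cN : module_complete N).
Hypotheses (HN : hausdorff_space N) (scM : @second_countable M).
Variables (f : {linear M -> N}) (cf : continuous f) (sf : forall y, exists x, f x = y).
Variables (B : nat -> set M) (hB : chain B) (U : nat -> set N) (hU : chain U).

Lemma open_img_cl (V : set M) : open V -> is_submodule V ->
  exists m, forall u, U m u -> forall n, exists v, V v /\ U n (u - f v).
Proof.
move=> oV sV.
have [Us U0n Ud Ub] := hU.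
have [D hD] := coset_enum hM scM oV sV.
have [k [y0 [m H]]] : exists k y0 m, forall u, U m u ->
    clo U (fun y => exists v, V v /\ y = f (D k + v)) (y0 + u).
  apply: (@baire _ _ hN cN U hU (fun k y => exists v, V v /\ y = f (D k + v))).
  move=> y; have [x <-] := sf y; have [k hk] := hD x.
  by exists k, (x - D k); split => //; rewrite addrC subrK.
exists m => u hu n.
have [a [[v [Vv ->]] h1]] := H u hu n.
have [a' [[v' [Vv' ->]] h2]] := H 0 (sub0 (Us m)) n.
rewrite addr0 in h2.
exists (v - v'); split; first exact: subB.
rewrite linearB (zid y0 u (f (D k))) -!linearD.
exact: subB.
Qed.

Lemma open_img (j : nat) (oB : forall n, open (B n)) : exists m, U m `<=` f @` B j.
Proof.
have [Us U0n Ud Ub] := hU.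
have [Bs B0n Bd Bb] := hB.
have Ule := chain_le hU.
have Ble := chain_le hB.
have /choice [mf hmf] : forall i, exists m, forall u, U m u ->
    forall n, exists v, B (j.+1 + i) v /\ U n (u - f v).
  by move=> i; apply: open_img_cl.
pose mm i := maxn (mf i) i.
have mmf i : U (mm i) `<=` U (mf i) by apply: Ule; apply: leq_maxl.
have mmi i : (i <= mm i)%N by apply: leq_maxr.
exists (mm 0) => y hy.
have /choice [xf hxf] : forall ip : nat * M, exists x, U (mm ip.1) (y - f ip.2) ->
    B (j.+1 + ip.1) x /\ U (mm ip.1.+1) (y - f ip.2 - f x).
  move=> [i p] /= ; case: (pselect (U (mm i) (y - f p))) => h; last by exists 0.
  have [v [hv1 hv2]] := hmf i _ (mmf i _ h) (mm i.+1).
  by exists v.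
pose ps := fix ps i := if i is i'.+1 then ps i' + xf (i', ps i') else 0.
have inv i : U (mm i) (y - f (ps i)).
  elim: i => [|i IH]; first by rewrite /= linear0 subr0.
  have [_ h] := hxf (i, ps i) IH.
  by rewrite /= linearD opprD addrA.
have stp i : B (j.+1 + i) (ps i.+1 - ps i).
  by have [h _] := hxf (i, ps i) (inv i); rewrite /= addrC addKr.
have hg : {homo (fun i => j.+1 + i)%N : a b / (a <= b)%N}.
  by move=> a b hab; rewrite leq_add2l.
have [x hx] := @chain_conv _ _ hM B cM hB (fun i => j.+1 + i)%N hg
  (fun i => leq_addl _ _) ps stp.
exists x.
  by have := hx 0; rewrite /= subr0 addn0; apply: Ble; apply: leqnSn.
apply/eqP; rewrite eq_sym -subr_eq0; apply/eqP.
apply: (hausdorff0 hN HN hU) => n.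
have hf : nbhs 0 (f @^-1` U n).
  have h0 : nbhs (f 0) (U n) by rewrite linear0.
  exact: (cf h0).
have [q hq] := Bb _ hf.
pose i := maxn n q.
rewrite (subr_mid2 _ _ (f (ps i))) -linearB.
apply: (subB (Us n)).
  by apply: (Ule _ _ (leq_trans (leq_maxl n q) (mmi i))); apply: inv.
apply: hq; apply: (Ble _ _ _ _ (hx i)).
by rewrite (leq_trans (leq_maxr n q)) // leq_addl.
Qed.
End Open.

Lemma zid2 (V : zmodType) (a z y c : V) : a - (y - c) = (a - (z - c)) + (z - y).
Proof.
rewrite !opprB -addrA; congr (_ + _).
by rewrite -addrA [- z + _]addrA addNr add0r.
Qed.

Section Surj.
Variables (R : topPzRingType) (M N : topLmodType R).
Hypotheses (tM : td_module M) (tN : td_module N).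
Variables (f : {linear M -> N}) (cf : continuous f) (sf : forall y, exists x, f x = y).

Lemma surj_main : strict f /\ exists s : N -> M, continuous s /\ cancel s f.
Proof.
have [hM HM cM _ scM] := tM.
have [hN HN cN _ _] := tN.
have [B [hB oB B0]] := td_chain tM.
have [U [hU oU U0]] := td_chain tN.
have [Bs B0n Bd Bb] := hB.
have [Us U0n Ud Ub] := hU.
pose W n := f @` B n.
have hW : chain W.
  split.
  - by move=> n; apply: sub_img.
  - move=> n; have [m hm] := open_img hM hN cM cN HN scM cf sf hB hU n oB.
    exact: filterS hm (U0n m).
  - by move=> n _ [x hx <-]; exists x => //; apply: Bd.
  - move=> G hG.
    have h0 : nbhs (f 0) G by rewrite linear0.
    have [q hq] := Bb _ (cf h0).
    by exists q => _ [x hx <-]; apply: hq.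
have [Ws W0n Wd Wb] := hW.
have W0 : W 0 = setT.
  by apply/seteqP; split => // y _; have [x hx] := sf y; exists x => //; rewrite B0.
split.
  split.
  - move=> V oV.
    have -> : f @^-1` (V `&` range f) = f @^-1` V.
      by apply/seteqP; split => x; [case|split => //; exists x].
    by move: oV; apply: (proj1 (continuousP f) cf).
  - move=> U' oU' _; exists (f @` U').
      rewrite openE => _ [x Ux <-].
      have hx : nbhs x U' by move: oU'; rewrite openE; apply.
      have [q hq] := Bb _ (nbhs_at0 hM hx).
      apply: filterS (nbhs0_at hN (f x) (W0n q)) => z [b hb ez].
      by exists (x + b); [apply: hq|rewrite linearD ez addrC subrK].
    apply/seteqP; split => [y hy|y [] //]; split => //.
    by case: hy => x _ <-; exists x.
pose Q n (t : N -> M) y := fun x => B n x /\ W n.+1 (f x - (y - f (t y))).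
pose ss := fix ss n := if n is n'.+1 then (fun y => ss n' y + xget 0 (Q n' (ss n') y))
  else (fun _ => 0).
have inv n : (forall y, W n (f (ss n y) - y)) /\
    (forall y z, W n (z - y) -> ss n z = ss n y).
  elim: n => [|n [IH1 IH2]]; first by rewrite W0.
  have ex y : exists x, Q n (ss n) y x.
    have := subBr (Ws n) (IH1 y) => -[x Bx fx].
    by exists x; split => //; rewrite fx subrr; apply: sub0.
  split.
  - move=> y; have [_ h] := xgetPex 0 (ex y).
    rewrite /= linearD; rewrite opprB addrA in h.
    by rewrite [f (ss n y) + _]addrC.
  - move=> y z hzy /=; have e := IH2 y z (Wd _ _ hzy).
    rewrite e; congr (_ + xget 0 _); apply/funext => x; apply/propext.
    rewrite /Q e; split => -[bx h]; split => //.
      by rewrite (zid2 _ z); apply: subD.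
    by rewrite (zid2 _ y); apply: subD => //; apply: subBr.
have stp n y : B n (ss n.+1 y - ss n y).
  have ex : exists x, Q n (ss n) y x.
    have := subBr (Ws n) ((inv n).1 y) => -[x Bx fx].
    by exists x; split => //; rewrite fx subrr; apply: sub0.
  by rewrite /= addrAC subrr add0r; case: (xgetPex 0 ex).
have /choice [s hs] : forall y, exists x, forall n, B n (x - ss n y).
  move=> y.
  exact: (@chain_conv _ _ hM B cM hB id (fun a b h => h) (fun k => leqnn k) (fun n => ss n y) (fun n => stp n y)).
exists s; split.
  apply: cont_loc => y A hA.
  have [q hq] := Bb _ (nbhs_at0 hM hA).
  apply: filterS (nbhs0_at hN y (W0n q)) => z hz /=.
  have := hq (s z - s y); rewrite [s y + _]addrC subrK; apply.
  have e := (inv q).2 y z hz.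
  rewrite (subr_mid2 _ _ (ss q z)); apply: (subB (Bs q)); first exact: hs.
  by rewrite e; apply: hs.
move=> y; apply/eqP; rewrite -subr_eq0; apply/eqP.
apply: (hausdorff0 hN HN hW) => n.
have -> : f (s y) - y = f (s y - ss n y) + (f (ss n y) - y) by rewrite linearB addrA subrK.
apply: (subD (Ws n)); first by exists (s y - ss n y).
exact: (inv n).1.
Qed.
End Surj.

Unset Implicit Arguments.

Theorem proposition2p7 (R : topPzRingType)
  (R_topring : topological_ring R) (R_compact : compact [set: R])
  (R_hausdorff : hausdorff_space R) (R_first : first_countable R) :
  (forall (M N : topLmodType R), td_module M -> td_module N ->
     forall f : {linear M -> N}, continuous f ->
     (forall y : N, exists x : M, f x = y) ->
     strict f /\ exists s : N -> M, continuous s /\ cancel s f)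
  /\
  (forall (M N : topLmodType R), td_module M -> td_module N ->
     forall i : {linear M -> N}, continuous i -> injective i ->
     (strict i <-> exists r : N -> M, continuous r /\ cancel i r)).
Proof.
split.
  by move=> M N tM tN f cf sf; apply: surj_main.
move=> M N tM tN i ci ii; split.
  by move=> si; apply: retract_ex.
move=> [r [cr ir]]; split.
- move=> V oV.
  have -> : i @^-1` (V `&` range i) = i @^-1` V.
    by apply/seteqP; split => x; [case|split => //; exists x].
  by move: oV; apply: (proj1 (continuousP i) ci).
- move=> U' oU' _; exists (r @^-1` U').
    by move: oU'; apply: (proj1 (continuousP r) cr).
  apply/seteqP; split => [_ [x hx <-]|y [h [x _ exy]]].
    by split; [rewrite /= ir|exists x].
  by subst y; rewrite /= ir in h; exists x.
Qed.
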